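(* Let $K\ge 2$ and $0\le e_1\le\dots\le e_K<\infty$. For nonempty $I\subseteq\{1,\dots,K\}$ write $A(I):=\frac1{|I|}\sum_{i\in I}e_i$. For nonempty $R\subseteq\{1,\dots,K\}$ and $j\in\{1,\dots,|R|\}$ let \[ \mathrm{AV}^R(j):=\min_{I\subseteq\{1,\dots,K\}:\ |R\setminus I|<j}A(I), \] and let $R_j$ denote $R$ with its $j-1$ largest elements removed. Then \[ \mathrm{AV}^R(j)=\min_{0\le i\le K}A\bigl(R_j\cup\{1,\dots,i\}\bigr), \] where $\{1,\dots,0\}:=\emptyset$. In particular, for $r\in\{1,\dots,K\}$, $R=\{K-r+1,\dots,K\}$ and $j\in\{1,\dots,r\}$, \[ \mathrm{AV}^{R}(j)=\min_{0\le i\le K-r}\frac{s_i+\sigma_j}{i+r-j+1},\qquad s_i:=e_1+\dots+e_i,\ \ \sigma_j:=e_{K-r+1}+\dots+e_{K-j+1}. \]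
   Context: Here ''the largest elements'' of $R$ are its largest indices, which correspond to the largest values since $e_1\le\dots\le e_K$; $s_0:=0$. *)

(* Defs.v *)
(* Indices {1,...,K} of the paper are represented 0-based by 'I_K:
   the ordinal k : 'I_K stands for the paper's index k+1. *)
From HB Require Import structures.
From mathcomp Require Import all_boot all_order all_algebra.
Set Implicit Arguments. Unset Strict Implicit. Unset Printing Implicit Defensive.
Import Order.TTheory GRing.Theory Num.Theory.
Local Open Scope ring_scope.

Definition avg (R : realFieldType) (K : nat) (e : 'I_K -> R) (I : {set 'I_K}) : R :=
  (\sum_(i in I) e i) / (#|I|%:R).

(* AV^Rs(j) = min over I with |Rs \ I| < j of A(I).  The seed A(setT) is itself
   a member of the family (|Rs \ setT| = 0 < j for j >= 1), so this fold is the minimum. *)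
Definition AV (R : realFieldType) (K : nat) (e : 'I_K -> R) (Rs : {set 'I_K}) (j : nat) : R :=
  \big[Num.min/avg e setT]_(I : {set 'I_K} | (#|Rs :\: I| < j)%N) avg e I.

(* Rs_j : Rs with its j-1 largest elements removed: x is kept iff at least j-1
   elements of Rs are strictly larger than x. *)
Definition Rj (K : nat) (Rs : {set 'I_K}) (j : nat) : {set 'I_K} :=
  [set x in Rs | (j.-1 <= #|[set y in Rs | x < y]|)%N].

Definition init_seg (K : nat) (i : nat) : {set 'I_K} := [set k : 'I_K | (k < i)%N].

Definition AV_formula (R : realFieldType) (K : nat) (e : 'I_K -> R) (Rs : {set 'I_K}) (j : nat) : R :=
  \big[Num.min/avg e (Rj Rs j)]_(i < K.+1) avg e (Rj Rs j :|: init_seg K i).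

Definition s_ (R : realFieldType) (K : nat) (e : 'I_K -> R) (i : nat) : R :=
  \sum_(k : 'I_K | (k < i)%N) e k.

Definition sigma_ (R : realFieldType) (K : nat) (e : 'I_K -> R) (r j : nat) : R :=
  \sum_(k : 'I_K | (K - r <= k <= K - j)%N) e k.

Definition top_set (K r : nat) : {set 'I_K} := [set k : 'I_K | (K - r <= k)%N].

Definition AV_top_formula (R : realFieldType) (K : nat) (e : 'I_K -> R) (r j : nat) : R :=
  \big[Num.min/(s_ e 0 + sigma_ e r j) / ((r - j + 1)%N%:R)]_(i < (K - r).+1)
     ((s_ e i + sigma_ e r j) / ((i + r - j + 1)%N%:R)).

(* Main.v *)
Require Import Defs.
From HB Require Import structures.
From mathcomp Require Import all_boot all_order all_algebra.
From mathcomp Require Import zify.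
Import Order.TTheory GRing.Theory Num.Theory.
Local Open Scope ring_scope.

Section Proofs.
Variables (R : realFieldType) (K : nat) (e : 'I_K -> R).
Hypothesis he0 : forall i, 0 <= e i.
Hypothesis hmono : forall i k : 'I_K, (i <= k)%N -> e i <= e k.

Definition up (S : {set 'I_K}) (t : nat) := S :&: [set x : 'I_K | (t <= x)%N].

Definition prd (t : 'I_K) : 'I_K := Ordinal (leq_ltn_trans (leq_pred t) (ltn_ord t)).
Definition Fd (t : 'I_K) : R := if val t == 0%N then e t else e t - e (prd t).

Lemma Fd_ge0 t : 0 <= Fd t.
Proof.
rewrite /Fd; case: ifP => _; first exact: he0.
by rewrite subr_ge0; apply: hmono; rewrite /= leq_pred.
Qed.

Lemma tele m (H : (m < K)%N) : \sum_(t : 'I_K | (t <= m)%N) Fd t = e (Ordinal H).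
Proof.
elim: m H => [|m IH] H.
  rewrite (eq_bigl (fun t => t == Ordinal H)); last first.
    by move=> t; apply/idP/eqP => [|->//]; rewrite leqn0 => /eqP ht; apply: val_inj.
  by rewrite big_pred1_eq /Fd /=.
rewrite (bigD1 (Ordinal H)) //=.
rewrite (eq_bigl (fun t : 'I_K => (t <= m)%N)); last first.
  move=> t; rewrite -val_eqE /=; apply/andP/idP => [[h1 h2]|h]; first by lia.
  by split; lia.
rewrite (IH (ltnW H)) /Fd /=.
have -> : prd (Ordinal H) = Ordinal (ltnW H) by apply: val_inj.
by rewrite subrK.
Qed.

Lemma dec (S : {set 'I_K}) :
  \sum_(x in S) e x = \sum_(t : 'I_K) Fd t * (#|up S t|)%:R.
Proof.
transitivity (\sum_(x in S) \sum_(t : 'I_K) (if (t <= x)%N then Fd t else 0)).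
  apply: eq_bigr => x _; rewrite -big_mkcond (@tele x (ltn_ord x)).
  by congr e; apply: val_inj.
rewrite exchange_big; apply: eq_bigr => t _.
rewrite -big_mkcondr.
transitivity (\sum_(x in up S t) Fd t); first by apply: eq_bigl => x; rewrite !inE.
by rewrite sumr_const mulr_natr.
Qed.

Lemma cmp (J I : {set 'I_K}) :
  (forall t, (#|up J t| <= #|up I t|)%N) ->
  \sum_(x in J) e x <= \sum_(x in I) e x.
Proof.
move=> h; rewrite !dec; apply: ler_sum => t _.
by apply: ler_wpM2l; [exact: Fd_ge0 | rewrite ler_nat].
Qed.

Lemma avg_le (J I : {set 'I_K}) : #|J| = #|I| ->
  (forall t, (#|up J t| <= #|up I t|)%N) -> avg e J <= avg e I.
Proof.
move=> hc h; rewrite /avg hc; apply: ler_wpM2r; last exact: cmp.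
by rewrite invr_ge0 ler0n.
Qed.

Lemma tail (Rs I : {set 'I_K}) j : (#|Rs :\: I| < j)%N ->
  forall t, (#|up (Rj Rs j) t| <= #|up I t|)%N.
Proof.
move=> hI t.
have [->|[x0 hx0]] := set_0Vmem (up (Rj Rs j) t); first by rewrite cards0.
case: (@arg_maxnP _ x0 (mem (up (Rj Rs j) t)) (fun x : 'I_K => val x) hx0).
move=> xm xm_in xm_max.
move: (xm_in); rewrite !inE => /andP[/andP[xmRs hcnt] txm].
set A := up (Rj Rs j) t.
set G := [set y in Rs | (xm < y)%N].
have AG0 : A :&: G = set0.
  apply/setP => y; rewrite in_setI in_set0; apply/negbTE/negP => /andP[yA].
  rewrite inE => /andP[_ hy].
  have := xm_max y yA; rewrite /=; lia.
have h1 : (#|A| + #|G| <= #|up Rs t|)%N.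
  have <- : #|A :|: G| = (#|A| + #|G|)%N by rewrite cardsU AG0 cards0 subn0.
  apply: subset_leq_card; apply/subsetP => y; rewrite !inE.
  case/orP => [/andP[/andP[-> _] ->] //| /andP[-> hy]] /=; lia.
have h2 : (#|up Rs t| <= #|up I t| + #|Rs :\: I|)%N.
  apply: leq_trans (leq_card_setU _ _).
  apply: subset_leq_card; apply/subsetP => y; rewrite !inE.
  by case/andP => -> ->; rewrite andbT; case: (y \in I).
move: hcnt h1 h2 hI; rewrite /G; lia.
Qed.

Lemma Rj_sub (Rs : {set 'I_K}) j : Rj Rs j \subset Rs.
Proof. by apply/subsetP => x; rewrite inE => /andP[]. Qed.

Lemma Rs_minus (Rs : {set 'I_K}) j : (1 <= j)%N -> (#|Rs :\: Rj Rs j| <= j.-1)%N.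
Proof.
move=> hj; rewrite leqNgt; apply/negP => hD.
set D := Rs :\: Rj Rs j.
have [D0|[x0 hx0]] := set_0Vmem D; first by move: hD; rewrite -/D D0 cards0.
case: (@arg_minnP _ x0 (mem D) (fun x : 'I_K => val x) hx0).
move=> xm xm_in xm_min.
have hsub : D :\ xm \subset [set y in Rs | (xm < y)%N].
  apply/subsetP => y; rewrite in_setD1 => /andP[hne yD].
  move: (yD); rewrite /D !inE => /andP[_ yRs].
  rewrite yRs /=; have := xm_min y yD; have : val y != val xm by rewrite val_eqE.
  rewrite /=; lia.
move: (xm_in); rewrite !inE => /andP[/negP hn xRs]; apply: hn.
rewrite xRs /=.
have xD : xm \in D := xm_in.
have hD' : (j.-1 < #|D|)%N := hD.
have := subset_leq_card hsub; have := cardsD1 xm D; rewrite xD /=.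
move=> a b.
clear hD; clearbody D.
by move: hD'; rewrite a add1n ltnS => h; apply: leq_trans h b.
Qed.

Lemma init_segK : init_seg K K = setT.
Proof. by apply/setP => x; rewrite !inE ltn_ord. Qed.

Lemma ivt (A I : {set 'I_K}) : (#|A| <= #|I|)%N ->
  exists i, (i <= K)%N /\ #|A :|: init_seg K i| = #|I|.
Proof.
move=> hAI.
have step i : (#|A :|: init_seg K i.+1| <= (#|A :|: init_seg K i|).+1)%N.
  have hs : A :|: init_seg K i.+1 \subset
      (A :|: init_seg K i) :|: [set k : 'I_K | val k == i].
    by apply/subsetP => x; rewrite !inE ltnS leq_eqVlt; case: (x \in A) => //=; case/orP => ->; rewrite ?orbT.
  apply: leq_trans (subset_leq_card hs) _.
  apply: leq_trans (leq_card_setU _ _) _.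
  rewrite -addn1 leq_add2l.
  by apply/card_le1_eqP => x y; rewrite !inE => /eqP hx /eqP hy; apply: val_inj; rewrite hx hy.
have exP : exists i, (#|I| <= #|A :|: init_seg K i|)%N.
  by exists K; rewrite init_segK setUT cardsT card_ord; have := max_card (mem I); rewrite card_ord.
case: (ex_minnP exP) => i hi hmin.
exists i; split.
  apply: hmin; rewrite init_segK setUT cardsT card_ord.
  by have := max_card (mem I); rewrite card_ord.
apply/eqP; rewrite eqn_leq hi andbT.
move: hi hmin; case: i => [|i] hi hmin.
  have -> : init_seg K 0 = set0 by apply/setP => x; rewrite !inE.
  by rewrite setU0.
have := step i; have : ~~ (#|I| <= #|A :|: init_seg K i|)%N.
  by apply/negP => /hmin; rewrite ltnn.
lia.
Qed.

Lemma up0 (S : {set 'I_K}) : up S 0 = S.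
Proof. by apply/setP => x; rewrite !inE andbT. Qed.

Lemma gen (Rs I : {set 'I_K}) j : (#|Rs :\: I| < j)%N -> AV_formula e Rs j <= avg e I.
Proof.
move=> hI; have ht := tail _ _ _ hI.
have hc : (#|Rj Rs j| <= #|I|)%N by have := ht 0%N; rewrite !up0.
have [i [hiK hci]] := ivt _ _ hc.
apply: le_trans (avg_le _ _ hci _).
  rewrite /AV_formula.
exact: (bigmin_le _ (Ordinal (n:=K.+1) (m:=i) hiK)).

move=> t; case: (leqP i t) => hit.
  have -> : up (Rj Rs j :|: init_seg K i) t = up (Rj Rs j) t.
    apply/setP => x; rewrite /up /init_seg !inE.
    case: (ltnP x i) => hx; last by rewrite orbF.
    rewrite (_ : (t <= x)%N = false) ?andbF //; apply/negbTE; rewrite -ltnNge.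
    exact: leq_trans hx hit.
  exact: ht.
set B := [set x : 'I_K | (t <= x)%N].
have h1 := cardsID B (Rj Rs j :|: init_seg K i).
have h2 := cardsID B I.
have h3 : (#|I :\: B| <= #|(Rj Rs j :|: init_seg K i) :\: B|)%N.
  apply: subset_leq_card; apply/subsetP => x; rewrite /B /init_seg !inE.
  case/andP => hx _; rewrite hx /=; apply/orP; right; rewrite -ltnNge in hx.
  exact: ltn_trans hx hit.
rewrite /up -/B; move: h1 h2 h3; rewrite hci.
move=> h1 h2 h3; rewrite -(leq_add2r #|(Rj Rs j :|: init_seg K i) :\: B|) h1 -h2 leq_add2l.
exact: h3.
Qed.

Lemma part1 (Rs : {set 'I_K}) j : (1 <= j)%N -> AV e Rs j = AV_formula e Rs j.
Proof.
move=> hj1.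
have hRm := Rs_minus Rs _ hj1.
apply/le_anti/andP; split.
- rewrite /AV_formula; apply: le_bigmin.
  + rewrite /AV; apply: bigmin_le_cond; lia.
  + move=> i _; rewrite /AV; apply: bigmin_le_cond.
    have := subset_leq_card (setDS Rs (subsetUl (Rj Rs j) (init_seg K i))); lia.
- rewrite /AV; apply: le_bigmin.
  + by apply: gen; rewrite setDT cards0.
  + by move=> I hI; apply: gen.
Qed.

Lemma cardlt b : (b <= K)%N -> #|[set k : 'I_K | (k < b)%N]| = b.
Proof.
elim: b => [|b IH] hb.
  by apply/eqP; rewrite cards_eq0; apply/eqP/setP => x; rewrite !inE.
have -> : [set k : 'I_K | (k < b.+1)%N] = Ordinal hb |: [set k : 'I_K | (k < b)%N].
  by apply/setP => x; rewrite !inE ltnS leq_eqVlt -val_eqE.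
by rewrite cardsU1 IH ?(ltnW hb) // inE ltnn.
Qed.

Lemma cardge a : (a <= K)%N -> #|[set k : 'I_K | (a <= k)%N]| = (K - a)%N.
Proof.
move=> ha.
have -> : [set k : 'I_K | (a <= k)%N] = ~: [set k : 'I_K | (k < a)%N].
  by apply/setP => x; rewrite !inE -leqNgt.
have := cardsC [set k : 'I_K | (k < a)%N]; rewrite cardlt // card_ord.
lia.
Qed.

Lemma avg_mono (A B : {set 'I_K}) : A \subset B ->
  (forall x y, x \in A -> y \in B :\: A -> (x <= y)%N) -> avg e A <= avg e B.
Proof.
move=> hAB hxy.
have SB : \sum_(x in B) e x = \sum_(x in A) e x + \sum_(x in B :\: A) e x.
  by rewrite (big_setID A) (setIidPr hAB).
have CB : #|B| = (#|A| + #|B :\: A|)%N.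
  by rewrite -(cardsID A B) (setIidPr hAB).
have SBge : 0 <= \sum_(x in B) e x by apply: sumr_ge0 => x _; exact: he0.
case: (posnP #|A|) => hA.
  rewrite /avg hA invr0 mulr0; apply: divr_ge0 => //; exact: ler0n.
have key : (#|B :\: A|)%:R * \sum_(x in A) e x <= (#|A|)%:R * \sum_(x in B :\: A) e x.
  have -> : (#|B :\: A|)%:R * \sum_(x in A) e x = \sum_(y in B :\: A) \sum_(x in A) e x.
    by rewrite sumr_const mulr_natl.
  have -> : (#|A|)%:R * \sum_(x in B :\: A) e x = \sum_(y in B :\: A) \sum_(x in A) e y.
    by rewrite mulr_natl -sumrMnl; apply: eq_bigr => y _; rewrite sumr_const.
  apply: ler_sum => y hy; apply: ler_sum => x hx; apply: hmono; exact: hxy.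
rewrite /avg SB CB natrD.
have hA' : 0 < (#|A|)%:R :> R by rewrite ltr0n.
have hAB' : 0 < (#|A|)%:R + (#|B :\: A|)%:R :> R.
  by apply: ltr_wpDr; [exact: ler0n|].
rewrite ler_pdivrMr // mulrAC ler_pdivlMr //.
rewrite mulrDr mulrDl lerD2l mulrC.
by rewrite [X in _ <= X]mulrC.
Qed.

Lemma hRj r j : (r <= K)%N -> (1 <= j)%N -> (j <= r)%N ->
  Rj (top_set K r) j = [set k : 'I_K | (K - r <= k)%N && (k <= K - j)%N].
Proof.
move=> hr hj hjr; apply/setP => x; rewrite /Rj /top_set !inE.
case: (leqP (K - r) x) => hx //=.
have -> : [set y in [set k : 'I_K | (K - r <= k)%N] | (x < y)%N] =
          [set y : 'I_K | (x.+1 <= y)%N].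
  apply/setP => y; rewrite !inE; apply/idP/idP => [/andP[_ ->] // | h].
  by rewrite h andbT; lia.
rewrite cardge ?ltn_ord //.
have hxK := ltn_ord x.
rewrite -subn1; apply/idP/idP => h; lia.
Qed.

Lemma card_Rj r j : (r <= K)%N -> (1 <= j <= r)%N ->
  #|Rj (top_set K r) j| = (r - j + 1)%N.
Proof.
move=> hr /andP[hj1 hjr]; rewrite hRj //.
have := cardsID [set k : 'I_K | (k < K - r)%N] [set k : 'I_K | (k < K - j + 1)%N].
have -> : [set k : 'I_K | (k < K - j + 1)%N] :&: [set k : 'I_K | (k < K - r)%N]
   = [set k : 'I_K | (k < K - r)%N].
  apply/setP => x; rewrite !inE; apply/idP/idP => [/andP[_ ->] //| h].
  by rewrite h andbT; lia.
have -> : [set k : 'I_K | (k < K - j + 1)%N] :\: [set k : 'I_K | (k < K - r)%N]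
   = [set k : 'I_K | (K - r <= k)%N && (k <= K - j)%N].
  apply/setP => x; rewrite !inE -leqNgt; apply/idP/idP => /andP[h1 h2]; apply/andP; split; lia.
rewrite !cardlt.
move=> h; have h' : (K - r + #|[set k : 'I_K | (K - r <= k)%N && (k <= K - j)%N]|)%N = (K - j + 1)%N := h.
clear h. move: h'. set c := #|_|. move=> h'. lia.
lia. lia.
Qed.

Lemma hg r j i : (r <= K)%N -> (1 <= j <= r)%N -> (i <= K - r)%N ->
  avg e (Rj (top_set K r) j :|: init_seg K i) =
  (s_ e i + sigma_ e r j) / ((i + r - j + 1)%N%:R).
Proof.
move=> hr /andP[hj1 hjr] hi.
have E1 : (Rj (top_set K r) j :|: init_seg K i) :&: init_seg K i = init_seg K i.
  by apply/setIidPr; apply: subsetUr.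
have E2 : (Rj (top_set K r) j :|: init_seg K i) :\: init_seg K i = Rj (top_set K r) j.
  apply/setP => x; rewrite hRj // /init_seg !inE.
  case: (ltnP x i) => hx /=; last by rewrite orbF.
  apply/esym/negbTE/negP => /andP[h1 _]; lia.
rewrite /avg (big_setID (init_seg K i)) E1 E2.
rewrite -(cardsID (init_seg K i) (Rj (top_set K r) j :|: init_seg K i)) E1 E2.
rewrite card_Rj ?hjr ?hj1 // /init_seg cardlt; last by lia.
congr (_ / _); last by congr (_%:R); lia.
congr (_ + _).
  by rewrite /s_; apply: eq_bigl => x; rewrite inE.
by rewrite /sigma_ hRj //; apply: eq_bigl => x; rewrite inE.
Qed.

Lemma hmon r j i : (r <= K)%N -> (1 <= j <= r)%N -> (K - r <= i)%N ->
  avg e (Rj (top_set K r) j :|: init_seg K (K - r)) <=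
  avg e (Rj (top_set K r) j :|: init_seg K i).
Proof.
move=> hr /andP[hj1 hjr] hi.
apply: avg_mono.
  apply/subsetP => x; rewrite /init_seg !inE.
  case/orP => [->//|h]; apply/orP; right; lia.
move=> x y; rewrite hRj // /init_seg !inE => hxA /andP[hyA hyB].
lia.
Qed.

Lemma part2 r j : (1 <= r <= K)%N -> (1 <= j <= r)%N ->
  AV e (top_set K r) j = AV_top_formula e r j.
Proof.
move=> /andP[hr1 hr] hj; have /andP[hj1 hjr] := hj.
rewrite part1 //.
have f0 : avg e (Rj (top_set K r) j) = (s_ e 0 + sigma_ e r j) / ((r - j + 1)%N%:R).
  have := hg r j 0 hr hj (leq0n _).
  rewrite (_ : init_seg K 0 = set0) ?setU0; last by apply/setP=> x; rewrite !inE.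
  by rewrite add0n.
apply/le_anti/andP; split.
- rewrite /AV_top_formula; apply: le_bigmin.
  + rewrite -f0 /AV_formula; exact: bigmin_le_id.
  + move=> i _.
    have hi : (i <= K - r)%N by rewrite -ltnS ltn_ord.
    rewrite -(hg r j i hr hj hi) /AV_formula.
    have hiK : (i < K.+1)%N by lia.
    exact: (bigmin_le _ (Ordinal hiK)).
- rewrite /AV_formula; apply: le_bigmin.
  + rewrite f0; exact: bigmin_le_id.
  + move=> i _; case: (leqP i (K - r)) => hi.
      rewrite (hg r j i hr hj hi) /AV_top_formula.
      exact: (bigmin_le _ (Ordinal (n:=(K - r).+1) (m:=i) hi)).
    apply: le_trans (hmon r j i hr hj (ltnW hi)).
    rewrite (hg r j (K - r) hr hj (leqnn _)) /AV_top_formula.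
    exact: (bigmin_le _ (@ord_max (K - r))).
Qed.

End Proofs.

Theorem mainTheorem4 (R : realFieldType) (K : nat) (e : 'I_K -> R)
  (hK : (2 <= K)%N)
  (he0 : forall i, 0 <= e i)
  (hmono : forall i k : 'I_K, (i <= k)%N -> e i <= e k) :
  (forall (Rs : {set 'I_K}) (j : nat),
      Rs != set0 -> (1 <= j <= #|Rs|)%N ->
      AV e Rs j = AV_formula e Rs j) /\
  (forall r j : nat, (1 <= r <= K)%N -> (1 <= j <= r)%N ->
      AV e (top_set K r) j = AV_top_formula e r j).
Proof.
split.
  move=> Rs j _ /andP[hj _]; exact: part1 he0 hmono Rs j hj.
move=> r j hr hj; exact: part2 he0 hmono r j hr hj.
Qed.
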